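(* There is an absolute constant $K>0$ such that the following holds. Let $C\ge1$ be an integer and let $\xi\in(0,1)$ be an irrational number with partial quotients bounded by $C$. Let $N\ge 2$ and $1\le a\le N-1$ be integers with $\gcd(a,N)=1$, and put $\delta = \left|\xi - \frac{a}{N}\right|$. Then $\mathrm{gen}(a,N-a)$ is a binary word with exactly $N-1$ distinct subsequences and of length at most \[ K\left( C\log N + N\sqrt{\delta C^3}\right). \]
   Context: An irrational number $\theta$ with continued fraction $[c_0;c_1,c_2,\ldots]$ has partial quotients bounded by $C$ if $c_i\le C$ for all $i\ge0$. Words are over $\{\mathsf{A},\mathsf{B}\}$; the number of subsequences of a word counts distinct subsequences (not necessarily contiguous), the empty one included. For coprime integers $a,b\ge1$, $\mathrm{gen}(a,b)$ is defined recursively by: $\mathrm{gen}(1,1)$ is the empty word; $\mathrm{gen}(a,b)=\mathsf{A}\circ\mathrm{gen}(a-b,b)$ if $a>b$; $\mathrm{gen}(a,b)=\mathsf{B}\circ\mathrm{gen}(a,b-a)$ if $b>a$, where $\circ$ is concatenation. *)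

(* Defs.v *)
From Stdlib Require Import Reals List Arith ZArith.
Import ListNotations.
Open Scope R_scope.

Inductive letter : Type := LA | LB.

Definition letter_eq_dec (x y : letter) : {x = y} + {x <> y}.
Proof. decide equality. Defined.

Definition word := list letter.

Definition word_eq_dec (u v : word) : {u = v} + {u <> v} :=
  list_eq_dec letter_eq_dec u v.

Fixpoint subseqs (w : word) : list word :=
  match w with
  | [] => [ [] ]
  | x :: w' => subseqs w' ++ map (cons x) (subseqs w')
  end.

(** Number of distinct subsequences (empty one included). *)
Definition num_subseq (w : word) : nat :=
  length (nodup word_eq_dec (subseqs w)).

(** gen(a,b), computed with fuel; fuel a+b is sufficient for coprime a,b >= 1
    (each step decreases a+b by at least 1; stops at (1,1)). *)
Fixpoint gen_aux (fuel a b : nat) : word :=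
  match fuel with
  | O => []
  | S f =>
      if Nat.eqb a b then []
      else if Nat.ltb b a then LA :: gen_aux f (a - b) b
      else LB :: gen_aux f a (b - a)
  end.

Definition gen (a b : nat) : word := gen_aux (a + b) a b.

(** Continued fraction of a real: complete quotients and partial quotients.
    Int_part is the floor function. *)
Fixpoint complete_quot (x : R) (n : nat) : R :=
  match n with
  | O => x
  | S m => / (complete_quot x m - IZR (Int_part (complete_quot x m)))
  end.

Definition partial_quot (x : R) (n : nat) : Z := Int_part (complete_quot x n).

Definition irrational (x : R) : Prop :=
  ~ exists (p q : Z), q <> 0%Z /\ x = IZR p / IZR q.

Definition pq_bounded (C : nat) (x : R) : Prop :=
  forall i : nat, (partial_quot x i <= Z.of_nat C)%Z.

(* Main.v *)
Require Import Defs.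
From Stdlib Require Import Reals List Arith ZArith Lia Lra Psatz.
Import ListNotations.
Open Scope R_scope.

Lemma gen_aux_fuel : forall f1 f2 a b, (1 <= a)%nat -> (1 <= b)%nat ->
  (a + b <= f1)%nat -> (a + b <= f2)%nat -> gen_aux f1 a b = gen_aux f2 a b.
Proof.
  induction f1 as [|f IH]; intros f2 a b Ha Hb H1 H2; [lia|].
  destruct f2 as [|g]; [lia|]. simpl.
  destruct (Nat.eqb a b) eqn:E; [reflexivity|].
  apply Nat.eqb_neq in E.
  destruct (Nat.ltb b a) eqn:L.
  - apply Nat.ltb_lt in L. f_equal. apply IH; lia.
  - apply Nat.ltb_ge in L. f_equal. apply IH; lia.
Qed.

Lemma gen_eq : forall a b, (1 <= a)%nat -> (1 <= b)%nat ->
  gen a b = if Nat.eqb a b then [] else if Nat.ltb b a then LA :: gen (a - b) b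
            else LB :: gen a (b - a).
Proof.
  intros a b Ha Hb. unfold gen.
  replace (a + b)%nat with (S (a + b - 1)) at 1 by lia. simpl.
  destruct (Nat.eqb a b) eqn:E; [reflexivity|].
  apply Nat.eqb_neq in E.
  destruct (Nat.ltb b a) eqn:L.
  - apply Nat.ltb_lt in L. f_equal. apply gen_aux_fuel; lia.
  - apply Nat.ltb_ge in L. f_equal. apply gen_aux_fuel; lia.
Qed.

Lemma gen_len : forall s a b, (a + b <= s)%nat -> (1 <= a)%nat -> (1 <= b)%nat ->
  (length (gen a b) <= a + b)%nat.
Proof.
  induction s; intros a b Hs Ha Hb; [lia|].
  rewrite gen_eq by lia.
  destruct (Nat.eqb a b) eqn:E; [simpl; lia|].
  apply Nat.eqb_neq in E.
  destruct (Nat.ltb b a) eqn:L.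
  - apply Nat.ltb_lt in L. simpl. pose proof (IHs (a-b)%nat b). lia.
  - apply Nat.ltb_ge in L. simpl. pose proof (IHs a (b-a)%nat). lia.
Qed.

Definition cnt (l : list word) : nat := length (nodup word_eq_dec l).

Lemma cnt_same : forall l l', (forall u, In u l <-> In u l') -> cnt l = cnt l'.
Proof.
  intros l l' H. unfold cnt. apply Nat.le_antisymm; apply NoDup_incl_length;
  try apply NoDup_nodup; intros u Hu; apply nodup_In; apply nodup_In in Hu; apply H; auto.
Qed.

Lemma cnt_nodup : forall l, NoDup l -> cnt l = length l.
Proof. intros. unfold cnt. rewrite nodup_fixed_point; auto. Qed.

Lemma in_sub_cons : forall x w u, In u (subseqs (x :: w)) <->
  In u (subseqs w) \/ exists u', u = x :: u' /\ In u' (subseqs w).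
Proof.
  intros. simpl. rewrite in_app_iff, in_map_iff.
  split; intros [H|H]; auto; right; destruct H as [u' [H1 H2]]; eauto.
Qed.

Lemma sub_tail : forall w x u, In (x :: u) (subseqs w) -> In u (subseqs w).
Proof.
  induction w as [|y w IH]; intros x u H.
  - simpl in H. destruct H as [H|[]]. discriminate.
  - apply in_sub_cons in H. apply in_sub_cons. destruct H as [H|[u' [H1 H2]]].
    + left. eapply IH; eauto.
    + inversion H1; subst. left. auto.
Qed.

Definition fin (x : letter) (w : word) (u : word) : bool :=
  if in_dec word_eq_dec (x :: u) (subseqs w) then true else false.

Definition mm (x : letter) (w : word) : nat := cnt (filter (fin x w) (subseqs w)).

Lemma lemA : forall x w, (cnt (subseqs (x :: w)) + mm x w = 2 * cnt (subseqs w))%nat.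
Proof.
  intros x w. set (D := nodup word_eq_dec (subseqs w)).
  assert (E1 : cnt (subseqs (x :: w)) =
     cnt (D ++ map (cons x) (filter (fun u => negb (fin x w u)) D))).
  { apply cnt_same. intro u. rewrite in_sub_cons, in_app_iff, in_map_iff.
    unfold D. rewrite nodup_In. split.
    - intros [H|[u' [H1 H2]]]; auto.
      destruct (fin x w u') eqn:F.
      + left. subst. unfold fin in F. destruct (in_dec word_eq_dec (x :: u') (subseqs w)); [assumption|discriminate].
      + right. exists u'. split; auto. apply filter_In. rewrite F. split; auto. apply nodup_In; auto.
    - intros [H|[u' [H1 H2]]]; auto. apply filter_In in H2. destruct H2 as [H2 _].
      apply nodup_In in H2. right; eauto. }
  assert (E2 : mm x w = cnt (filter (fin x w) D)).
  { apply cnt_same. intro u. rewrite !filter_In. unfold D. rewrite nodup_In. tauto. }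
  assert (ND : NoDup D) by apply NoDup_nodup.
  assert (E3 : cnt (subseqs w) = length D) by reflexivity.
  rewrite E1, E2, E3, (cnt_nodup (filter _ D)), cnt_nodup.
  - rewrite length_app, length_map.
    pose proof (filter_length (fin x w) D). unfold word in *. lia.
  - apply NoDup_app; auto.
    + apply NoDup_map_NoDup_ForallPairs. intros a b _ _ H; inversion H; auto.
      apply NoDup_filter; auto.
    + intros a Ha Hb. apply in_map_iff in Hb. destruct Hb as [u' [H1 H2]].
      apply filter_In in H2. destruct H2 as [_ H2]. subst.
      unfold D in Ha. apply nodup_In in Ha. unfold fin in H2.
      destruct (in_dec word_eq_dec (x :: u') (subseqs w)); simpl in H2; congruence.
  - apply NoDup_filter; auto.
Qed.

Lemma lemB : forall x w, mm x (x :: w) = cnt (subseqs w).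
Proof.
  intros. apply cnt_same. intro u. rewrite filter_In. unfold fin.
  destruct (in_dec word_eq_dec (x :: u) (subseqs (x :: w))) as [H|H].
  - split; [intros _|intros; split; auto; apply in_sub_cons; auto].
    apply in_sub_cons in H. destruct H as [H|[u' [H1 H2]]].
    + eapply sub_tail; eauto.
    + inversion H1; subst; auto.
  - split; [intros [_ F]; discriminate|]. intros Hu. exfalso. apply H.
    apply in_sub_cons. right. eauto.
Qed.

Lemma lemC : forall x y w, y <> x -> mm y (x :: w) = mm y w.
Proof.
  intros. apply cnt_same. intro u. rewrite !filter_In. unfold fin.
  destruct (in_dec word_eq_dec (y :: u) (subseqs (x :: w))) as [H1|H1];
  destruct (in_dec word_eq_dec (y :: u) (subseqs w)) as [H2|H2].
  - split; intros [A B]; split; auto.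
    + eapply sub_tail; eauto.
    + apply in_sub_cons; auto.
  - apply in_sub_cons in H1. destruct H1 as [H1|[u' [E _]]]; [tauto|]. inversion E; congruence.
  - exfalso. apply H1. apply in_sub_cons. auto.
  - split; intros [_ F]; discriminate.
Qed.

Lemma count_gen : forall s a b, (a + b <= s)%nat -> (1 <= a)%nat -> (1 <= b)%nat ->
  Nat.gcd a b = 1%nat ->
  cnt (subseqs (gen a b)) = (a + b - 1)%nat /\ mm LA (gen a b) = (a - 1)%nat /\
  mm LB (gen a b) = (b - 1)%nat.
Proof.
  induction s; intros a b Hs Ha Hb G; [lia|].
  rewrite gen_eq by lia.
  destruct (Nat.eqb a b) eqn:E.
  - apply Nat.eqb_eq in E. subst b. rewrite Nat.gcd_diag in G. subst a.
    vm_compute. auto.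
  - apply Nat.eqb_neq in E.
    destruct (Nat.ltb b a) eqn:L.
    + apply Nat.ltb_lt in L.
      assert (G' : Nat.gcd (a - b) b = 1%nat).
      { rewrite Nat.gcd_comm, Nat.gcd_sub_diag_r by lia. rewrite Nat.gcd_comm; auto. }
      destruct (IHs (a - b)%nat b ltac:(lia) ltac:(lia) Hb G') as [H1 [H2 H3]].
      pose proof (lemA LA (gen (a - b) b)).
      rewrite lemB, lemC by discriminate. lia.
    + apply Nat.ltb_ge in L.
      assert (G' : Nat.gcd a (b - a) = 1%nat).
      { rewrite Nat.gcd_sub_diag_r by lia. auto. }
      destruct (IHs a (b - a)%nat ltac:(lia) Ha ltac:(lia) G') as [H1 [H2 H3]].
      pose proof (lemA LB (gen a (b - a))).
      rewrite lemB, lemC by discriminate. lia.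
Qed.
Definition q xi n := complete_quot xi n.
Definition cR xi n := IZR (partial_quot xi n).

Definition rationalR (r : R) := exists p q : Z, q <> 0%Z /\ r = IZR p / IZR q.

Lemma rat_back : forall xi n, rationalR (complete_quot xi n) -> rationalR xi.
Proof.
  intros xi n. induction n as [|m IH]; intros H; [exact H|].
  apply IH. simpl in H. set (z := complete_quot xi m) in *.
  set (I := Int_part z) in *.
  destruct (Req_dec (z - IZR I) 0) as [E|E].
  - exists I, 1%Z. split; [lia|]. replace (IZR 1) with 1 by reflexivity. lra.
  - destruct H as [p [qq [Hq Hv]]].
    assert (Hp : p <> 0%Z).
    { intro Hp0. subst p. rewrite Rdiv_0_l in Hv. apply (Rinv_neq_0_compat _ E). exact Hv. }
    exists (I * p + qq)%Z, p. split; auto.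
    assert (Hz : z - IZR I = / (IZR p / IZR qq)).
    { rewrite <- Hv. rewrite Rinv_inv. reflexivity. }
    rewrite plus_IZR, mult_IZR.
    assert (IZR p <> 0) by (apply not_0_IZR; auto).
    assert (IZR qq <> 0) by (apply not_0_IZR; auto).
    replace z with (IZR I + (z - IZR I)) by ring. rewrite Hz. field. auto.
Qed.

Lemma cq_bounds : forall xi, irrational xi -> forall n,
  cR xi n < q xi n < cR xi n + 1.
Proof.
  intros xi Hirr n. unfold cR, q, partial_quot.
  destruct (base_Int_part (complete_quot xi n)) as [H1 H2].
  split; [|lra].
  destruct (Req_dec (IZR (Int_part (complete_quot xi n))) (complete_quot xi n)) as [E|E];
  [|lra].
  exfalso. apply Hirr. apply (rat_back xi n).
  exists (Int_part (complete_quot xi n)), 1%Z. split; [lia|].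
  replace (IZR 1) with 1 by reflexivity. lra.
Qed.

Lemma cq_S : forall xi n, q xi (S n) = / (q xi n - cR xi n).
Proof. reflexivity. Qed.

Lemma c_bounds : forall xi C, irrational xi -> pq_bounded C xi ->
  forall n, (1 <= n)%nat -> 1 <= cR xi n <= INR C.
Proof.
  intros xi C Hirr Hb n Hn. destruct n as [|m]; [lia|].
  pose proof (cq_bounds xi Hirr m) as [A B].
  pose proof (cq_bounds xi Hirr (S m)) as [A' B'].
  assert (Hgt : 1 < q xi (S m)).
  { rewrite cq_S. replace 1 with (/ 1) by apply Rinv_1.
    apply Rinv_lt_contravar; lra. }
  split.
  - unfold cR in *. assert (0 < IZR (partial_quot xi (S m))) by lra.
    apply lt_IZR in H. apply IZR_le. lia.
  - unfold cR. rewrite INR_IZR_INZ. apply IZR_le. apply Hb.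
Qed.

Lemma int_eq : forall (p : Z) (j : nat), INR j + 1 <= IZR p -> IZR p < INR j + 2 ->
  IZR p = INR j + 1.
Proof.
  intros p j H1 H2. rewrite INR_IZR_INZ in *.
  assert (E1 : IZR (Z.of_nat j + 1) <= IZR p) by (rewrite plus_IZR; exact H1).
  assert (E2 : IZR p < IZR (Z.of_nat j + 2)) by (rewrite plus_IZR; exact H2).
  apply le_IZR in E1. apply lt_IZR in E2.
  assert (p = Z.of_nat j + 1)%Z by lia. subst p. rewrite plus_IZR. reflexivity.
Qed.

Lemma tail_real (C a b x y P Q : R) : 1 <= C -> b <= a -> 0 <= b -> 0 < x -> x < y ->
  (C+2)*x <= (C+1)*y -> 0 <= P -> 0 <= Q -> Q <= (C+1)*P -> P*x + Q*y = 1 ->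
  (a+b)^2 <= 36 * C^3 * ((P*a+Q*b) * Rabs (a*y - b*x)).
Proof.
  intros HC Hba Hb Hx Hxy Hr HP HQ HQP Hn.
  assert (H0 : 0 <= (a-b)*(x+y)) by (apply Rmult_le_pos; lra).
  assert (D1 : a*y - b*x >= (a+b)*(y-x)/2) by nra.
  assert (D2 : (C+2)*(y-x) >= y) by nra.
  assert (H3 : P*x <= P*y) by (apply Rmult_le_compat_l; lra).
  assert (H4 : Q*y <= (C+1)*P*y) by (apply Rmult_le_compat_r; lra).
  assert (D3 : 1 <= (C+2)*P*y) by nra.
  assert (H5 : 0 <= P*(a-b)) by (apply Rmult_le_pos; lra).
  assert (H6 : 0 <= Q*b) by (apply Rmult_le_pos; lra).
  assert (D4 : P*a+Q*b >= P*(a+b)/2) by nra.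
  assert (HS : 0 <= (a+b)*(y-x)/2) by (apply Rmult_le_pos; [apply Rmult_le_pos|]; lra).
  assert (HR : (a+b)*(y-x)/2 <= Rabs (a*y - b*x)) by (rewrite Rabs_pos_eq; lra).
  assert (HN : 0 <= P*(a+b)/2) by (apply Rmult_le_pos; [apply Rmult_le_pos|]; lra).
  assert (D5 : (P*(a+b)/2) * ((a+b)*(y-x)/2) <= (P*a+Q*b) * Rabs (a*y - b*x)).
  { apply Rmult_le_compat; lra. }
  assert (D6 : 1 <= (C+2)^2 * (P*(y-x))).
  { assert (E0 : P*y <= P*((C+2)*(y-x))) by (apply Rmult_le_compat_l; lra).
    assert (E1 : (C+2)*(P*y) <= (C+2)*(P*((C+2)*(y-x)))) by (apply Rmult_le_compat_l; lra).
    replace ((C+2)^2 * (P*(y-x))) with ((C+2)*(P*((C+2)*(y-x)))) by ring.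
    replace ((C+2)*P*y) with ((C+2)*(P*y)) in D3 by ring. lra. }
  assert (D7 : (a+b)^2 <= 4 * (C+2)^2 * ((P*a+Q*b) * Rabs (a*y - b*x))).
  { assert (E : (P*(a+b)/2) * ((a+b)*(y-x)/2) = (a+b)^2 * (P*(y-x)) / 4) by field.
    assert ((a+b)^2 * 1 <= (a+b)^2 * ((C+2)^2 * (P*(y-x)))).
    { apply Rmult_le_compat_l; [nra|lra]. }
    nra. }
  assert (D8 : 4 * (C+2)^2 <= 36 * C^3) by nra.
  assert (0 <= (P*a+Q*b) * Rabs (a*y - b*x)) by (eapply Rle_trans; [|exact D5]; apply Rmult_le_pos; lra).
  nra.
Qed.

Lemma tail_concl (C k r L s N D : R) : 0 <= C -> k <= C*r -> L <= s -> 0 <= s ->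
  s^2 <= 36 * C^3 * (N*D) -> k + L <= C*(r+1) + 6 * sqrt (N * D * C^3).
Proof.
  intros HC Hk HL Hs H.
  assert (s <= 6 * sqrt (N * D * C^3)).
  { rewrite <- (sqrt_pow2 s Hs).
    replace 6 with (sqrt 36) by (replace 36 with (6*6) by ring; apply sqrt_square; lra).
    rewrite <- sqrt_mult_alt by lra. apply sqrt_le_1_alt. nra. }
  nra.
Qed.
Definition Inv xi C x y P Q n j (fresh : bool) k r : Prop :=
  (1 <= n)%nat /\
  ((y < x /\ x = (q xi n - INR j) * y /\ INR j + 1 <= cR xi n /\
     INR Q <= (INR j + 1) * INR P /\ INR P <= (INR C + 1) * INR Q /\
     (fresh = true -> (Q <= P)%nat)) \/
   (x < y /\ y = (q xi n - INR j) * x /\ INR j + 1 <= cR xi n /\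
     INR P <= (INR j + 1) * INR Q /\ INR Q <= (INR C + 1) * INR P /\
     (fresh = true -> (P <= Q)%nat))) /\
  (if fresh then INR k <= INR C * INR r else INR k + (cR xi n - INR j) <= INR C * INR r) /\
  (4 * 2 ^ r <= (P + Q) ^ 2)%nat.

Lemma Inv_sym : forall xi C x y P Q n j f k r,
  Inv xi C x y P Q n j f k r -> Inv xi C y x Q P n j f k r.
Proof.
  intros. destruct H as [H1 [H2 [H3 H4]]]. split; [auto|]. split; [tauto|].
  split; [auto|]. rewrite Nat.add_comm. auto.
Qed.

Definition Concl C a b x y P Q k : Prop :=
  exists r', (4 * 2 ^ r' <= (P * a + Q * b) ^ 2)%nat /\
   INR (k + length (gen a b)) <= INR C * (INR r' + 1) +
     6 * sqrt (INR (P * a + Q * b) * Rabs (INR a * y - INR b * x) * INR C ^ 3).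

Lemma gen_swap_len : forall s a b, (a + b <= s)%nat -> (1 <= a)%nat -> (1 <= b)%nat ->
  length (gen b a) = length (gen a b).
Proof.
  induction s; intros a b Hs Ha Hb; [lia|].
  rewrite (gen_eq a b), (gen_eq b a) by lia.
  destruct (Nat.eqb a b) eqn:E.
  - apply Nat.eqb_eq in E. subst. rewrite Nat.eqb_refl. reflexivity.
  - apply Nat.eqb_neq in E. assert (E' : Nat.eqb b a = false) by (apply Nat.eqb_neq; lia).
    rewrite E'. destruct (Nat.ltb b a) eqn:L.
    + apply Nat.ltb_lt in L. assert (L' : Nat.ltb a b = false) by (apply Nat.ltb_ge; lia).
      rewrite L'. simpl. f_equal. apply IHs; lia.
    + apply Nat.ltb_ge in L. assert (L' : Nat.ltb a b = true) by (apply Nat.ltb_lt; lia).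
      rewrite L'. simpl. f_equal. apply IHs; lia.
Qed.

Lemma Concl_sym : forall C a b x y P Q k, (1 <= a)%nat -> (1 <= b)%nat ->
  Concl C a b x y P Q k -> Concl C b a y x Q P k.
Proof.
  intros C a b x y P Q k Ha Hb [r' [H1 H2]]. exists r'.
  rewrite (gen_swap_len (a + b)) by lia.
  rewrite (Nat.add_comm (Q * b)). split; auto.
  rewrite Rabs_minus_sym. exact H2.
Qed.

Lemma grow1 : forall P Q r, (4 * 2 ^ r <= (P + Q) ^ 2)%nat -> (Q <= P)%nat ->
  (4 * 2 ^ S r <= (P + (Q + P)) ^ 2)%nat.
Proof.
  intros. rewrite Nat.pow_succ_r'.
  assert (Q * Q <= P * P)%nat by (apply Nat.mul_le_mono; auto).
  assert (2 * (P + Q) ^ 2 <= (P + (Q + P)) ^ 2)%nat by (simpl; nia).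
  lia.
Qed.

Lemma grow0 : forall P Q r, (4 * 2 ^ r <= (P + Q) ^ 2)%nat ->
  (4 * 2 ^ r <= (P + (Q + P)) ^ 2)%nat.
Proof.
  intros. assert ((P + Q) ^ 2 <= (P + (Q + P)) ^ 2)%nat
    by (apply Nat.pow_le_mono_l; lia). lia.
Qed.

Lemma count_k : forall xi C x y P Q n j f k r, Inv xi C x y P Q n j f k r ->
  INR k <= INR C * INR r.
Proof.
  intros. destruct H as [_ [H2 [H3 _]]]. destruct f; [auto|].
  assert (INR j + 1 <= cR xi n) by (destruct H2 as [H2|H2]; tauto). lra.
Qed.

Section Sim.
Variables (xi : R) (C : nat).
Variable HC : (1 <= C)%nat.
Variable Hfr : forall n, cR xi n < q xi n < cR xi n + 1.
Variable Hc : forall n, (1 <= n)%nat -> 1 <= cR xi n <= INR C.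

Lemma frac_low : forall n, 1 <= (q xi n - cR xi n) * (INR C + 1).
Proof.
  intros n. pose proof (Hfr n). pose proof (Hfr (S n)). pose proof (Hc (S n) ltac:(lia)).
  rewrite cq_S in *. set (z := q xi n - cR xi n) in *.
  assert (0 < z) by (unfold z; lra).
  assert (/ z <= INR C + 1) by lra.
  apply (Rmult_le_compat_l z) in H3; [|lra]. rewrite Rinv_r in H3; lra.
Qed.

Lemma invA_cont : forall x y P Q n j fresh k r, Inv xi C x y P Q n j fresh k r ->
  y < x -> 0 < y -> INR j + 2 <= cR xi n ->
  Inv xi C (x - y) y P (Q + P) n (S j) false (S k) (if fresh then S r else r) /\ 0 < x - y.
Proof.
  intros x y P Q n j fresh k r [Hn [HB [Hk Hg]]] Hyx Hy Hj.
  destruct HB as [[_ [Hxe [Hj1 [HQj [HPC HF]]]]]|[Hxy _]]; [|lra].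
  pose proof (Hfr n) as [F1 F2]. pose proof (Hc n Hn) as [G1 G2].
  pose proof (pos_INR j). pose proof (pos_INR P). pose proof (pos_INR Q). pose proof (pos_INR C).
  assert (Hxy : x - y - y = (q xi n - INR j - 2) * y) by (rewrite Hxe at 1; ring).
  assert (Hpos : 0 < (q xi n - INR j - 2) * y) by (apply Rmult_lt_0_compat; lra).
  split; [|lra].
  split; [auto|]. split.
  - left. split; [lra|]. split; [rewrite S_INR, Hxe at 1; ring|].
    rewrite S_INR, plus_INR. split; [lra|]. split; [lra|]. split; [nra|].
    intro; discriminate.
  - split.
    + destruct fresh; cbv beta iota in Hk |- *; rewrite ?S_INR; nra.
    + destruct fresh; [apply grow1; auto|apply grow0; auto].
Qed.

Lemma invA_switch : forall x y P Q n j fresh k r, Inv xi C x y P Q n j fresh k r ->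
  y < x -> 0 < y -> cR xi n < INR j + 2 ->
  Inv xi C (x - y) y P (Q + P) (S n) 0 true (S k) (if fresh then S r else r) /\ 0 < x - y.
Proof.
  intros x y P Q n j fresh k r [Hn [HB [Hk Hg]]] Hyx Hy Hj.
  destruct HB as [[_ [Hxe [Hj1 [HQj [HPC HF]]]]]|[Hxy _]]; [|lra].
  pose proof (Hfr n) as [F1 F2]. pose proof (Hc n Hn) as [G1 G2].
  pose proof (Hc (S n) ltac:(lia)) as [G3 G4].
  pose proof (pos_INR j). pose proof (pos_INR P). pose proof (pos_INR Q). pose proof (pos_INR C).
  assert (Ec : cR xi n = INR j + 1) by (apply int_eq; auto).
  set (z := q xi n - cR xi n) in *.
  assert (Hz : 0 < z < 1) by (unfold z; lra).
  assert (Hxy : x - y = z * y) by (unfold z; rewrite Hxe at 1; rewrite Ec; ring).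
  assert (Hzy : z * y < y) by nra.
  assert (0 < z * y) by (apply Rmult_lt_0_compat; lra).
  split; [|lra].
  split; [lia|]. split.
  - right. split; [lra|]. split.
    { rewrite cq_S. fold z. simpl (INR 0). rewrite Hxy. field. lra. }
    simpl (INR 0). rewrite plus_INR. split; [lra|]. split; [lra|]. split.
    + assert (INR Q <= INR C * INR P).
      { eapply Rle_trans; [exact HQj|]. apply Rmult_le_compat_r; lra. }
      nra.
    + intros _. lia.
  - split.
    + destruct fresh; cbv beta iota in Hk |- *; rewrite ?S_INR; nra.
    + destruct fresh; [apply grow1; auto|apply grow0; auto].
Qed.

Lemma stepA : forall s,
  (forall a b x y P Q n j f k r, (a + b <= s)%nat -> (1 <= a)%nat -> (1 <= b)%nat ->
    0 < x -> 0 < y -> (1 <= P)%nat -> (1 <= Q)%nat ->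
    INR P * x + INR Q * y = 1 -> Inv xi C x y P Q n j f k r -> Concl C a b x y P Q k) ->
  forall a b x y P Q n j f k r, (a + b <= S s)%nat -> (b < a)%nat -> (1 <= b)%nat ->
    0 < x -> 0 < y -> (1 <= P)%nat -> (1 <= Q)%nat ->
    INR P * x + INR Q * y = 1 -> Inv xi C x y P Q n j f k r -> Concl C a b x y P Q k.
Proof.
  intros s IH a b x y P Q n j f k r Hs Hab Hb Hx Hy HP HQ Hnorm Hinv.
  pose proof (count_k _ _ _ _ _ _ _ _ _ _ _ Hinv) as Hk.
  pose proof Hinv as [Hn [HB [Hcnt Hg]]].
  pose proof (pos_INR P). pose proof (pos_INR Q). pose proof (pos_INR C).
  pose proof (pos_INR a). pose proof (pos_INR b). pose proof (pos_INR j).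
  assert (HC1 : 1 <= INR C) by (apply (le_INR 1); auto).
  destruct HB as [[Hyx [Hxe [Hj1 [HQj [HPC HF]]]]]|[Hxy [Hye [Hj1 [HPj [HQC HF]]]]]].
  -
    assert (Hgen : gen a b = LA :: gen (a - b) b).
    { rewrite gen_eq by lia. replace (Nat.eqb a b) with false by (symmetry; apply Nat.eqb_neq; lia).
      replace (Nat.ltb b a) with true by (symmetry; apply Nat.ltb_lt; lia). reflexivity. }
    assert (HN : (P * (a - b) + (Q + P) * b = P * a + Q * b)%nat).
    { replace a with (a - b + b)%nat at 2 by lia. ring. }
    assert (HD : INR (a - b) * y - INR b * (x - y) = INR a * y - INR b * x).
    { rewrite minus_INR by lia. ring. }
    assert (Hnorm' : INR P * (x - y) + INR (Q + P) * y = 1).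
    { rewrite plus_INR. rewrite <- Hnorm. ring. }
    assert (Hfin : forall n' j' f' r', Inv xi C (x - y) y P (Q + P) n' j' f' (S k) r' -> 0 < x - y ->
              Concl C a b x y P Q k).
    { intros n' j' f' r' Hi Hp.
      destruct (IH (a - b)%nat b (x - y) y P (Q + P)%nat n' j' f' (S k) r') as [r'' [A1 A2]];
        try lia; auto.
      exists r''. rewrite HN in A1. split; auto.
      rewrite Hgen. rewrite HN, HD in A2. simpl length. rewrite <- Nat.add_succ_comm. exact A2. }
    destruct (Rle_lt_dec (INR j + 2) (cR xi n)) as [Hj2|Hj2].
    + destruct (invA_cont x y P Q n j f k r Hinv Hyx Hy Hj2). eapply Hfin; eauto.
    + destruct (invA_switch x y P Q n j f k r Hinv Hyx Hy Hj2). eapply Hfin; eauto.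
  -
    exists r. split.
    { assert (P + Q <= P * a + Q * b)%nat by nia.
      assert ((P + Q) ^ 2 <= (P * a + Q * b) ^ 2)%nat by (apply Nat.pow_le_mono_l; auto).
      lia. }
    assert (Hl : (length (gen a b) <= a + b)%nat) by (apply (gen_len (a + b)); lia).
    rewrite plus_INR.
    apply tail_concl with (s := INR a + INR b); try lra.
    + rewrite <- plus_INR. apply le_INR. auto.
    + pose proof (frac_low n). pose proof (Hfr n).
      assert (Hr : (INR C + 2) * x <= (INR C + 1) * y).
      { rewrite Hye. assert (q xi n - INR j >= 1 + (q xi n - cR xi n)) by lra.
        assert ((INR C + 1) * x * (q xi n - INR j) >= (INR C + 1) * x * (1 + (q xi n - cR xi n))).
        { apply Rle_ge, Rmult_le_compat_l; [nra|lra]. }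
        nra. }
      rewrite plus_INR, !mult_INR.
      apply tail_real; try lra. apply le_INR. lia.
Qed.

End Sim.
Lemma sim : forall xi C, (1 <= C)%nat ->
  (forall n, cR xi n < q xi n < cR xi n + 1) ->
  (forall n, (1 <= n)%nat -> 1 <= cR xi n <= INR C) ->
  forall s a b x y P Q n j f k r, (a + b <= s)%nat -> (1 <= a)%nat -> (1 <= b)%nat ->
    0 < x -> 0 < y -> (1 <= P)%nat -> (1 <= Q)%nat ->
    INR P * x + INR Q * y = 1 -> Inv xi C x y P Q n j f k r -> Concl C a b x y P Q k.
Proof.
  intros xi C HC Hfr Hc s. induction s as [|s IHs];
    intros a b x y P Q n j f k r Hs Ha Hb Hx Hy HP HQ Hnorm Hinv; [lia|].
  destruct (lt_eq_lt_dec a b) as [[L|E]|L].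
  - apply Concl_sym; [lia|lia|].
    apply (stepA xi C HC Hfr Hc s IHs b a y x Q P n j f k r); try lia; auto.
    + lra.
    + apply Inv_sym. auto.
  - subst b. exists r. split.
    + destruct Hinv as [_ [_ [_ Hg]]].
      assert (P + Q <= P * a + Q * a)%nat by nia.
      assert ((P + Q) ^ 2 <= (P * a + Q * a) ^ 2)%nat by (apply Nat.pow_le_mono_l; auto).
      lia.
    + rewrite gen_eq, Nat.eqb_refl by lia. simpl length. rewrite Nat.add_0_r.
      pose proof (count_k _ _ _ _ _ _ _ _ _ _ _ Hinv).
      pose proof (pos_INR C).
      pose proof (sqrt_pos (INR (P * a + Q * a) * Rabs (INR a * y - INR a * x) * INR C ^ 3)).
      nra.
  - apply (stepA xi C HC Hfr Hc s IHs a b x y P Q n j f k r); try lia; auto.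
Qed.

Lemma init : forall xi C, irrational xi -> (1 <= C)%nat -> 0 < xi < 1 ->
  (forall n, cR xi n < q xi n < cR xi n + 1) ->
  (forall n, (1 <= n)%nat -> 1 <= cR xi n <= INR C) ->
  exists n j, Inv xi C xi (1 - xi) 1 1 n j true 0 0.
Proof.
  intros xi C Hirr HC Hxi Hfr Hc.
  assert (HC1 : 1 <= INR C) by (apply (le_INR 1); auto).
  assert (H0 : cR xi 0 = 0).
  { pose proof (Hfr 0%nat) as [A B]. unfold q in A, B. simpl in A, B. unfold cR in *.
    assert (E1 : IZR (partial_quot xi 0) < IZR 1) by (simpl; lra).
    assert (E2 : IZR (-1) < IZR (partial_quot xi 0)) by (simpl; lra).
    apply lt_IZR in E1. apply lt_IZR in E2.
    replace (partial_quot xi 0) with 0%Z by lia. reflexivity. }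
  assert (Hq1 : q xi 1 = / xi).
  { rewrite cq_S, H0. unfold q. simpl. f_equal. ring. }
  assert (Hg : (4 * 2 ^ 0 <= (1 + 1) ^ 2)%nat) by (simpl; lia).
  destruct (Rlt_le_dec xi (1/2)) as [Hl|Hl].
  - exists 1%nat, 1%nat.
    assert (Hi : 2 < / xi).
    { replace 2 with (/ (1/2)) by field. apply Rinv_lt_contravar; lra. }
    assert (Hc1 : 2 <= cR xi 1).
    { pose proof (Hfr 1%nat) as E0. unfold cR in *. rewrite Hq1 in E0.
      assert (E1 : IZR 1 < IZR (partial_quot xi 1)) by (simpl; lra).
      apply lt_IZR in E1. assert (E2 : (2 <= partial_quot xi 1)%Z) by lia.
      apply IZR_le in E2. simpl in E2. lra. }
    split; [lia|]. split.
    + right. split; [lra|]. split.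
      { rewrite Hq1. simpl (INR 1). field. lra. }
      simpl (INR 1). split; [lra|]. split; [lra|]. split; [lra|]. intros _; lia.
    + split; [simpl; lra|]. exact Hg.
  - assert (Hne : xi <> 1/2).
    { intro E. apply Hirr. exists 1%Z, 2%Z. split; [lia|]. rewrite E. reflexivity. }
    exists 2%nat, 0%nat.
    assert (Hi : 1 < / xi < 2).
    { split.
      - replace 1 with (/ 1) at 1 by apply Rinv_1. apply Rinv_lt_contravar; lra.
      - replace 2 with (/ (1/2)) by field. apply Rinv_lt_contravar; lra. }
    assert (Hc1 : cR xi 1 = 1).
    { pose proof (Hfr 1%nat) as E0. unfold cR in *. rewrite Hq1 in E0.
      assert (E1 : IZR (partial_quot xi 1) < IZR 2) by (simpl; lra).
      assert (E2 : IZR 0 < IZR (partial_quot xi 1)) by (simpl; lra).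
      apply lt_IZR in E1. apply lt_IZR in E2.
      replace (partial_quot xi 1) with 1%Z by lia. reflexivity. }
    assert (Hq2 : q xi 2 = xi / (1 - xi)).
    { rewrite cq_S, Hq1, Hc1.
      replace (/ xi - 1) with ((1 - xi) / xi) by (field; lra).
      unfold Rdiv. rewrite Rinv_mult, Rinv_inv. ring. }
    split; [lia|]. split.
    + left. split; [lra|]. split.
      { rewrite Hq2. simpl (INR 0). field. lra. }
      pose proof (Hc 2%nat ltac:(lia)).
      simpl (INR 0); simpl (INR 1). split; [lra|]. split; [lra|]. split; [lra|]. intros _; lia.
    + split; [simpl; lra|]. exact Hg.
Qed.

Lemma ln_le' : forall x y, 0 < x -> x <= y -> ln x <= ln y.
Proof.
  intros x y Hx Hxy. destruct (Rle_lt_or_eq_dec _ _ Hxy) as [H|H].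
  - left. apply ln_increasing; auto.
  - subst. lra.
Qed.

Theorem theorem4 :
  exists K : R, 0 < K /\
  forall (C : nat) (xi : R) (N a : nat),
    (1 <= C)%nat ->
    0 < xi < 1 -> irrational xi -> pq_bounded C xi ->
    (2 <= N)%nat -> (1 <= a <= N - 1)%nat -> Nat.gcd a N = 1%nat ->
    let delta := Rabs (xi - INR a / INR N) in
    num_subseq (gen a (N - a)) = (N - 1)%nat /\
    INR (length (gen a (N - a))) <=
      K * (INR C * ln (INR N) + INR N * sqrt (delta * INR C ^ 3)).
Proof.
  exists 6. split; [lra|].
  intros C xi N a HC Hxi Hirr Hpq HN Ha Hgcd delta.
  assert (G : Nat.gcd a (N - a) = 1%nat) by (rewrite Nat.gcd_sub_diag_r by lia; auto).
  split.
  - change (cnt (subseqs (gen a (N - a))) = (N - 1)%nat).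
    destruct (count_gen (a + (N - a)) a (N - a)) as [H1 _]; try lia; auto.
  - pose proof (cq_bounds xi Hirr) as Hfr.
    pose proof (c_bounds xi C Hirr Hpq) as Hc.
    destruct (init xi C Hirr HC Hxi Hfr Hc) as [n [j Hinv]].
    destruct (sim xi C HC Hfr Hc (a + (N - a)) a (N - a) xi (1 - xi) 1 1 n j true 0 0)
      as [r' [G1 G2]]; try lia; auto; try lra.
    all: try (simpl (INR 1); ring).
    replace (1 * a + 1 * (N - a))%nat with N in G1, G2 by lia.
    assert (HNpos : 2 <= INR N) by (apply (le_INR 2); auto).
    assert (HD : Rabs (INR a * (1 - xi) - INR (N - a) * xi) = INR N * delta).
    { subst delta. rewrite minus_INR by lia.
      replace (INR a * (1 - xi) - (INR N - INR a) * xi) with (INR N * (- (xi - INR a / INR N)))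
        by (field; lra).
      rewrite Rabs_mult, Rabs_Ropp, Rabs_pos_eq by lra. reflexivity. }
    rewrite HD in G2.
    replace (INR N * (INR N * delta) * INR C ^ 3) with (INR N ^ 2 * (delta * INR C ^ 3)) in G2
      by ring.
    rewrite sqrt_mult_alt, sqrt_pow2 in G2 by (try apply pow2_ge_0; lra).
    simpl (0 + _)%nat in G2.
    apply le_INR in G1. rewrite mult_INR, !pow_INR in G1.
    replace (INR 4) with (2^2) in G1 by (simpl; ring).
    replace (INR 2) with 2 in G1 by (simpl; ring).
    assert (Hp : 0 < 2 ^ r') by (apply pow_lt; lra).
    assert (Hpos : 0 < 2^2 * 2 ^ r') by (apply Rmult_lt_0_compat; lra).
    apply ln_le' in G1; auto.
    rewrite ln_mult in G1 by (try apply pow_lt; lra).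
    rewrite !ln_pow in G1 by lra.
    pose proof ln_lt_2 as L2.
    assert (HlnN : 0 <= ln (INR N)).
    { rewrite <- ln_1. apply ln_le'; lra. }
    pose proof (pos_INR r').
    assert (Hr : INR r' + 1 <= 4 * ln (INR N)).
    { simpl (INR 2) in G1. nra. }
    pose proof (pos_INR C).
    pose proof (sqrt_pos (delta * INR C ^ 3)).
    assert (INR C * (INR r' + 1) <= INR C * (4 * ln (INR N))) by (apply Rmult_le_compat_l; lra).
    assert (0 <= INR C * ln (INR N)) by (apply Rmult_le_pos; lra).
    assert (0 <= INR N * sqrt (delta * INR C ^ 3)) by (apply Rmult_le_pos; lra).
    lra.
Qed.
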